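(* Let $\xi=(\tau_L,\delta_L,\tau_R,\delta_R)\in\Phi_{\rm BYG}$ and suppose $J_1(\xi)>1$ and $\lambda_L^s+|\lambda_R^s|<1$. Let $\alpha\subset\Omega$ be a line segment with slope in $K=[-\lambda_L^s,|\lambda_R^s|]$. Then there exist $n\ge1$ and points $P$ on the $y$-axis and $Q$ on the $x$-axis such that the line segment from $P$ to $Q$ is contained in $f_\xi^n(\alpha)$. Moreover, this segment from $P$ to $Q$ intersects the line segment from $V$ to $f_\xi^{-1}(V)$ transversally.
   Context: For $\xi=(\tau_L,\delta_L,\tau_R,\delta_R)\in\mathbb{R}^4$ define $f_\xi(x,y)=(\tau_L x+y+1,\,-\delta_L x)$ if $x\le 0$ and $f_\xi(x,y)=(\tau_R x+y+1,\,-\delta_R x)$ if $x\ge 0$. Let $A_L=\begin{bmatrix}\tau_L&1\\-\delta_L&0\end{bmatrix}$, $A_R=\begin{bmatrix}\tau_R&1\\-\delta_R&0\end{bmatrix}$, $\Phi=\{\xi: \tau_L>\delta_L+1,\ \delta_L>0,\ \tau_R<-(\delta_R+1),\ \delta_R>0\}$. For $\xi\in\Phi$ the eigenvalues of $A_L$ are real with $0<\lambda_L^s<1<\lambda_L^u$, those of $A_R$ are real with $\lambda_R^u<-1<\lambda_R^s<0$, $f_\xi$ is a homeomorphism, and $Y=\left(\frac{-1}{\tau_L-\delta_L-1},\frac{\delta_L}{\tau_L-\delta_L-1}\right)$ is a fixed point. Let $\phi(\xi)=\delta_R-\left(\tau_R+\delta_L+\delta_R-(1+\tau_R)\lambda_L^u\right)\lambda_L^u$,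 $\Phi_{\rm BYG}=\{\xi\in\Phi:\phi(\xi)>0\}$, and $J_1(\xi)=\frac{\lambda_L^u(\lambda_R^u)^2}{\lambda_L^u+|\lambda_R^u|}$. Let $D=\left(\frac{1}{1-\lambda_L^s},0\right)$. Let $E^s(Y)$ be the line through $Y$ in the direction of an eigenvector of $A_L$ for $\lambda_L^s$, let $B$ be the intersection of the line segment from $Y$ to $D$ with the line through $f_\xi(D)$ parallel to $E^s(Y)$, and let $\Omega$ be the filled triangle with vertices $D$, $f_\xi(D)$, $B$. Let $V=\left(0,\frac{-\lambda_R^u}{\lambda_R^u-1}\right)$. A line segment has slope $m$ if it is parallel to $(1,m)$. *)

(* Defs.v *)
From Stdlib Require Import Reals Lra.
Open Scope R_scope.

Definition pt := (R * R)%type.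

Record param := mkParam { tauL : R; deltaL : R; tauR : R; deltaR : R }.

(* The piecewise-linear map f_xi (both formulas agree at x = 0). *)
Definition f (xi : param) (p : pt) : pt :=
  let (x, y) := p in
  if Rle_dec x 0 then (tauL xi * x + y + 1, - deltaL xi * x)
  else (tauR xi * x + y + 1, - deltaR xi * x).

(* Its inverse (valid when deltaL, deltaR > 0): the preimage x-coordinate
   is -w/delta, whose sign is that of -w. *)
Definition finv (xi : param) (q : pt) : pt :=
  let (u, w) := q in
  if Rle_dec 0 w then
    let x := - w / deltaL xi in (x, u - 1 - tauL xi * x)
  else
    let x := - w / deltaR xi in (x, u - 1 - tauR xi * x).

Definition in_Phi (xi : param) : Prop :=
  tauL xi > deltaL xi + 1 /\ deltaL xi > 0 /\
  tauR xi < - (deltaR xi + 1) /\ deltaR xi > 0.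

Definition discL xi := tauL xi ^ 2 - 4 * deltaL xi.
Definition discR xi := tauR xi ^ 2 - 4 * deltaR xi.
Definition lamLs xi := (tauL xi - sqrt (discL xi)) / 2.  (* 0 < . < 1 *)
Definition lamLu xi := (tauL xi + sqrt (discL xi)) / 2.  (* > 1 *)
Definition lamRu xi := (tauR xi - sqrt (discR xi)) / 2.  (* < -1 *)
Definition lamRs xi := (tauR xi + sqrt (discR xi)) / 2.  (* in (-1,0) *)

Definition phi (xi : param) : R :=
  deltaR xi - (tauR xi + deltaL xi + deltaR xi - (1 + tauR xi) * lamLu xi) * lamLu xi.

Definition in_Phi_BYG (xi : param) : Prop := in_Phi xi /\ phi xi > 0.

Definition J1 (xi : param) : R :=
  lamLu xi * (lamRu xi) ^ 2 / (lamLu xi + Rabs (lamRu xi)).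

Definition Y (xi : param) : pt :=
  (-1 / (tauL xi - deltaL xi - 1), deltaL xi / (tauL xi - deltaL xi - 1)).

Definition D (xi : param) : pt := (1 / (1 - lamLs xi), 0).

Definition V (xi : param) : pt := (0, - lamRu xi / (lamRu xi - 1)).

Definition evLs (xi : param) : pt := (1, lamLs xi - tauL xi).

Definition padd (p q : pt) : pt := (fst p + fst q, snd p + snd q).
Definition psub (p q : pt) : pt := (fst p - fst q, snd p - snd q).
Definition pscale (c : R) (p : pt) : pt := (c * fst p, c * snd p).
Definition cross (p q : pt) : R := fst p * snd q - snd p * fst q.

(* Intersection of the line through P1, P2 with the line through Q of direction v. *)
Definition line_inter (P1 P2 Q v : pt) : pt :=
  padd P1 (pscale (cross (psub Q P1) v / cross (psub P2 P1) v) (psub P2 P1)).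

Definition B (xi : param) : pt :=
  line_inter (Y xi) (D xi) (f xi (D xi)) (evLs xi).

Definition segment (P Q : pt) : pt -> Prop :=
  fun z => exists t, 0 <= t <= 1 /\ z = padd P (pscale t (psub Q P)).

Definition triangle (a b c : pt) : pt -> Prop :=
  fun z => exists s t u, 0 <= s /\ 0 <= t /\ 0 <= u /\ s + t + u = 1 /\
    z = padd (pscale s a) (padd (pscale t b) (pscale u c)).

Definition Omega (xi : param) : pt -> Prop := triangle (D xi) (f xi (D xi)) (B xi).

Definition image_iter (xi : param) (n : nat) (S : pt -> Prop) : pt -> Prop :=
  fun z => exists p, S p /\ z = Nat.iter n (f xi) p.

Definition transversal (P1 P2 Q1 Q2 : pt) : Prop :=
  (exists z, segment P1 P2 z /\ segment Q1 Q2 z) /\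
  cross (psub P2 P1) (psub Q2 Q1) <> 0.

(* Main.v *)
Require Import Defs.
From Stdlib Require Import Reals Lra Psatz.
Open Scope R_scope.
Module T1.

Record ctx (xi : param) (a b s u : R) : Prop := {
  eLs : lamLs xi = a; eLu : lamLu xi = b; eRs : lamRs xi = - s; eRu : lamRu xi = - u;
  hTL : tauL xi = a + b; hDL : deltaL xi = a * b;
  hTR : tauR xi = - (s + u); hDR : deltaR xi = s * u;
  ha0 : 0 < a; ha1 : a < 1; hb1 : 1 < b; hs0 : 0 < s; hs1 : s < 1; hu1 : 1 < u }.

Lemma get_ctx xi : in_Phi xi -> ctx xi (lamLs xi) (lamLu xi) (- lamRs xi) (- lamRu xi).
Proof.
  unfold in_Phi; intros [H1 [H2 [H3 H4]]].
  assert (dL : discL xi > 0).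
  { unfold discL. assert ((tauL xi - deltaL xi - 1)*(tauL xi + deltaL xi + 1) > 0) by (apply Rmult_lt_0_compat; lra).
    assert (0 <= (deltaL xi - 1)^2) by (apply pow2_ge_0). nra. }
  assert (dR : discR xi > 0).
  { unfold discR. assert ((- tauR xi - deltaR xi - 1)*(- tauR xi + deltaR xi + 1) > 0) by (apply Rmult_lt_0_compat; lra).
    assert (0 <= (deltaR xi - 1)^2) by (apply pow2_ge_0). nra. }
  pose proof (sqrt_sqrt _ (Rlt_le _ _ dL)) as sL.
  pose proof (sqrt_sqrt _ (Rlt_le _ _ dR)) as sR.
  pose proof (sqrt_lt_R0 _ dL) as pL.
  pose proof (sqrt_lt_R0 _ dR) as pR.
  unfold discL, discR in *.
  set (rL := sqrt (tauL xi ^ 2 - 4 * deltaL xi)) in *.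
  set (rR := sqrt (tauR xi ^ 2 - 4 * deltaR xi)) in *.
  unfold lamLs, lamLu, lamRs, lamRu, discL, discR; fold rL rR.
  assert (rL < tauL xi) by nra.
  assert (rR < - tauR xi) by nra.
  assert (aL1 : (tauL xi - rL)/2 < 1).
  { assert ((1 - (tauL xi - rL)/2) * ((tauL xi + rL)/2 - 1) > 0) by nra. nra. }
  assert (aR1 : (- tauR xi - rR)/2 < 1).
  { assert ((1 - (- tauR xi - rR)/2) * ((- tauR xi + rR)/2 - 1) > 0) by nra. nra. }
  constructor; try reflexivity; try lra; try nra.
  all: unfold lamRs, lamRu, discR; fold rR; ring.
Qed.

End T1.
Import T1.

Module T2.

Section S.
Variables (xi : param) (a b s u : R).
Hypothesis C : ctx xi a b s u.

Lemma fL x y : x <= 0 -> Defs.f xi (x,y) = ((a+b)*x + y + 1, -(a*b)*x).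
Proof. intros. unfold Defs.f. destruct (Rle_dec x 0); [|lra]. rewrite (hTL _ _ _ _ _ C), (hDL _ _ _ _ _ C). f_equal; ring. Qed.

Lemma fR x y : 0 <= x -> Defs.f xi (x,y) = (-(s+u)*x + y + 1, -(s*u)*x).
Proof. intros. unfold Defs.f. destruct (Rle_dec x 0).
  - assert (x = 0) by lra. subst. f_equal; ring.
  - rewrite (hTR _ _ _ _ _ C), (hDR _ _ _ _ _ C). f_equal; ring. Qed.

Definition dd := 1/(1-a).
Definition kk := b*(1 - (s+u)*dd) - s*u*dd.
Definition Hset (z : pt) : Prop :=
  a * fst z + snd z - a*dd <= 0 /\ b * fst z + snd z - kk >= 0 /\
  (a+s+u) * snd z - s*u*(fst z - dd) >= 0.

Lemma dd_pos : dd * (1 - a) = 1 /\ dd > 1.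
Proof. pose proof (ha0 _ _ _ _ _ C); pose proof (ha1 _ _ _ _ _ C). unfold dd. split.
  field; lra. apply (Rmult_lt_reg_r (1-a)); [lra|]. replace (1 / (1 - a) * (1 - a)) with 1 by (field; lra). lra. Qed.

Lemma phi_eq : (1-a) * ((b-1)*kk + b) = phi xi.
Proof. pose proof (ha1 _ _ _ _ _ C). unfold phi, kk, dd.
  rewrite (eLu _ _ _ _ _ C), (hTR _ _ _ _ _ C), (hDL _ _ _ _ _ C), (hDR _ _ _ _ _ C). field. lra. Qed.

Lemma Hset_x_le z : Hset z -> fst z <= dd.
Proof. unfold Hset; intros [H1 [H2 H3]]. pose proof (ha0 _ _ _ _ _ C); pose proof (hs0 _ _ _ _ _ C); pose proof (hu1 _ _ _ _ _ C).
  assert (s*u > 0) by nra. set (A := a+s+u) in *. assert (A > 0) by (unfold A; lra).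
  assert (A*(a * fst z + snd z - a*dd) <= 0) by (assert (0 <= A*(-(a * fst z + snd z - a*dd))) by (apply Rmult_le_pos; lra); lra).
  assert ((A*a + s*u)*(fst z - dd) <= 0) by nra.
  assert (A*a+s*u > 0) by nra. nra. Qed.

Lemma Hset_inv z : phi xi > 0 -> Hset z -> Hset (Defs.f xi z).
Proof.
  intros Hphi HH. pose proof (Hset_x_le z HH) as Hxd. destruct z as [x y]. unfold Hset in HH. destruct HH as [H1 [H2 H3]]. simpl in H1, H2, H3, Hxd.
  pose proof (ha0 _ _ _ _ _ C); pose proof (ha1 _ _ _ _ _ C); pose proof (hb1 _ _ _ _ _ C);
  pose proof (hs0 _ _ _ _ _ C); pose proof (hs1 _ _ _ _ _ C); pose proof (hu1 _ _ _ _ _ C).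
  destruct dd_pos as [Hd1 Hd2].
  assert (Hk : (b-1)*kk + b > 0).
  { rewrite <- phi_eq in Hphi. apply (Rmult_lt_reg_l (1-a)); lra. }
  destruct (Rle_dec x 0) as [Hx|Hx].
  - rewrite fL by lra. unfold Hset; simpl. split; [|split].
    + assert (a*((a+b)*x+y+1) + -(a*b)*x - a*dd = a*(a*x + y - a*dd)) by (unfold dd; field; lra). nra.
    + assert (b*((a+b)*x+y+1) + -(a*b)*x - kk = b*(b*x+y-kk) + ((b-1)*kk + b)) by ring. nra.
    + assert (su : s*u > 0) by nra.
      assert (E: (a+s+u)*(-(a*b)*x) - s*u*((a+b)*x+y+1 - dd) = -x*(a*b*(a+s+u) + s*u*b) - s*u*(a*x+y-a*dd))
        by (unfold dd; field; lra).
      rewrite E. assert (a*b*(a+s+u) + s*u*b > 0) by (apply Rplus_lt_0_compat; apply Rmult_lt_0_compat; nra).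
      nra.
  - rewrite fR by lra. unfold Hset; simpl. split; [|split].
    + assert (a*(-(s+u)*x+y+1) + -(s*u)*x - a*dd = -(a*(s+u)+s*u+a*a)*x + a*(a*x+y-a*dd)) by (unfold dd; field; lra).
      assert ((a*(s+u)+s*u+a*a) > 0) by nra. nra.
    + set (A := a+s+u). set (Cc := b*(s+u)+s*u).
      assert (Hbk : b - kk = dd*Cc) by (unfold kk, Cc; ring).
      assert (E : A*(b*(-(s+u)*x+y+1) + -(s*u)*x - kk) = b*(A*y - s*u*(x-dd)) + (A*Cc - b*s*u)*(dd - x)).
      { unfold A, Cc. unfold kk. ring. }
      assert (HAC : A*Cc - b*s*u > 0). { replace (A*Cc - b*s*u) with (a*Cc + (s+u)*(s*u) + b*(s*s+s*u+u*u)) by (unfold A, Cc; ring).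
        assert (su: s*u > 0) by (apply Rmult_lt_0_compat; lra).
        assert (Cc > 0) by (unfold Cc; assert (b*(s+u) > 0) by (apply Rmult_lt_0_compat; lra); lra).
        assert (b*(s*s+s*u+u*u) > 0) by (apply Rmult_lt_0_compat; nra). assert ((s+u)*(s*u)>0) by (apply Rmult_lt_0_compat; lra).
        assert (a*Cc > 0) by (apply Rmult_lt_0_compat; lra). lra. }
      assert (A > 0) by (unfold A; lra).
      assert (b*(A*y - s*u*(x-dd)) >= 0) by (apply Rle_ge, Rmult_le_pos; unfold A; lra).
      assert ((A*Cc - b*s*u)*(dd - x) >= 0) by (apply Rle_ge, Rmult_le_pos; lra).
      assert (A*(b*(-(s+u)*x+y+1) + -(s*u)*x - kk) >= 0) by lra.
      destruct (Rge_or_gt (b*(-(s+u)*x+y+1) + -(s*u)*x - kk) 0); auto. nra.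
    + assert (E : (a+s+u)*(-(s*u)*x) - s*u*(-(s+u)*x+y+1 - dd) = -(s*u)*(a*x+y-a*dd)) by (unfold dd; field; lra).
      rewrite E. assert (s*u > 0) by nra. nra.
Qed.
End S.

End T2.
Import T2.

Module T3.

Section S.
Variables (xi : param) (a b s u : R).
Hypothesis C : ctx xi a b s u.
Let dd := dd a.
Let kk := kk a b s u.
Definition yx := - dd / (b-1).
Definition yy := a*b*dd/(b-1).
Definition lam := ((b-1)*kk + b)/((b-1)*b*dd + b).
Definition fDx := -(s+u)*dd + 0 + 1.
Definition fDy := -(s*u)*dd.

Lemma D_eq : D xi = (dd, 0).
Proof. unfold D. rewrite (eLs _ _ _ _ _ C). reflexivity. Qed.

Lemma fD_eq : Defs.f xi (D xi) = (fDx, fDy).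
Proof. rewrite D_eq. rewrite (fR _ _ _ _ _ C). reflexivity. destruct (dd_pos _ _ _ _ _ C). unfold dd. lra. Qed.

Lemma Y_eq : Y xi = (yx, yy).
Proof. pose proof (ha0 _ _ _ _ _ C); pose proof (ha1 _ _ _ _ _ C); pose proof (hb1 _ _ _ _ _ C).
  unfold Y. rewrite (hTL _ _ _ _ _ C), (hDL _ _ _ _ _ C). unfold yx, yy, dd, T2.dd.
  assert (a + b - a*b - 1 <> 0) by nra.
  f_equal; field; repeat split; lra. Qed.

Lemma B_eq : B xi = (yx + lam*(dd - yx), yy + lam*(0-yy)).
Proof. unfold B, line_inter. rewrite fD_eq, Y_eq, D_eq. unfold evLs. rewrite (eLs _ _ _ _ _ C), (hTL _ _ _ _ _ C).
  unfold padd, pscale, psub, cross; simpl.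
  replace (((fDx - yx) * (a - (a + b)) - (fDy - yy) * 1) / ((dd - yx) * (a - (a + b)) - (0 - yy) * 1)) with lam.
  reflexivity.
  pose proof (ha0 _ _ _ _ _ C); pose proof (ha1 _ _ _ _ _ C); pose proof (hb1 _ _ _ _ _ C).
  unfold lam, fDx, fDy, yx, yy, kk, T2.kk, dd, T2.dd.
  field. repeat split; try lra.
  all: assert (b*(b-a) > 0) by (apply Rmult_lt_0_compat; lra); nra.
Qed.
End S.

Definition aff (al be ga : R) (z : pt) := al * fst z + be * snd z + ga.
Lemma aff_conv al be ga P1 P2 P3 s1 t w : s1 + t + w = 1 ->
  aff al be ga (padd (pscale s1 P1) (padd (pscale t P2) (pscale w P3))) =
  s1 * aff al be ga P1 + t * aff al be ga P2 + w * aff al be ga P3.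
Proof. intros H. destruct P1, P2, P3. unfold aff, padd, pscale; simpl.
  replace s1 with (1 - t - w) by lra. ring. Qed.

Section S2.
Variables (xi : param) (a b s u : R).
Hypothesis C : ctx xi a b s u.
Hypothesis Hphi : phi xi > 0.
Let dd := dd a.
Let kk := kk a b s u.
Let yx := yx a b.
Let yy := yy a b.
Let lam := lam a b s u.

Lemma lam_bounds : 0 <= lam <= 1.
Proof. pose proof (ha0 _ _ _ _ _ C); pose proof (ha1 _ _ _ _ _ C); pose proof (hb1 _ _ _ _ _ C).
  pose proof (hs0 _ _ _ _ _ C); pose proof (hu1 _ _ _ _ _ C).
  destruct (dd_pos _ _ _ _ _ C) as [Hd1 Hd2]. fold dd in Hd1, Hd2.
  pose proof (phi_eq _ _ _ _ _ C) as Hp. fold kk dd in Hp.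
  assert (Hk : (b-1)*kk + b > 0). { apply (Rmult_lt_reg_l (1-a)); lra. }
  assert (Hden : (b-1)*b*dd + b > 0). { assert (0 < dd) by lra. assert (0<b-1) by lra. assert ((b-1)*b*dd > 0) by (apply Rmult_lt_0_compat; [apply Rmult_lt_0_compat|]; lra). lra. }
  assert (Hkb : kk <= b*dd).
  { unfold kk, T2.kk. fold dd. assert ((s+u)*dd > 0) by (apply Rmult_lt_0_compat; lra).
    assert (s*u*dd > 0) by (apply Rmult_lt_0_compat; [apply Rmult_lt_0_compat|]; lra). assert (b*((s+u)*dd) > 0) by (apply Rmult_lt_0_compat; lra). assert (b*(dd-1) > 0) by (apply Rmult_lt_0_compat; lra). nra. }
  unfold lam, T3.lam. fold kk dd. split.
  - apply Rle_mult_inv_pos; lra.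
  - apply (Rmult_le_reg_r ((b-1)*b*dd + b)); [lra|]. unfold Rdiv. rewrite Rmult_assoc, Rinv_l by lra.
    assert ((b-1)*kk <= (b-1)*(b*dd)) by (apply Rmult_le_compat_l; lra). lra.
Qed.

Lemma Omega_Hset z : Omega xi z -> Hset a b s u z.
Proof.
  pose proof (ha0 _ _ _ _ _ C); pose proof (ha1 _ _ _ _ _ C); pose proof (hb1 _ _ _ _ _ C).
  pose proof (hs0 _ _ _ _ _ C); pose proof (hu1 _ _ _ _ _ C).
  destruct (dd_pos _ _ _ _ _ C) as [Hd1 Hd2]. fold dd in Hd1, Hd2.
  pose proof lam_bounds as [Hl0 Hl1].
  unfold Omega, Defs.triangle. rewrite (fD_eq _ _ _ _ _ C), (B_eq _ _ _ _ _ C), (D_eq _ _ _ _ _ C).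
  fold dd kk yx yy lam.
  intros (s1 & t & w & Hs1 & Ht & Hw & Hsum & ->).
  assert (su : s*u > 0) by (apply Rmult_lt_0_compat; lra).
  assert (SY : a*yx + yy - a*dd = 0).
  { unfold yx, yy, T3.yx, T3.yy. fold dd. field. lra. }
  assert (Hyx : yx < 0). { unfold yx, T3.yx. fold dd. apply Rdiv_neg_pos; lra. }
  assert (Hyy : yy > 0). { unfold yy, T3.yy. fold dd. apply Rdiv_pos_pos; [apply Rmult_lt_0_compat; [apply Rmult_lt_0_compat|]|]; lra. }
  assert (EfD : (a+s+u)*fDy a s u - s*u*(fDx a s u - dd) = 0).
  { unfold fDx, fDy, dd, T2.dd. field. lra. }
  assert (GfD : b*fDx a s u + fDy a s u - kk = 0). { unfold fDx, fDy, kk, T2.kk. fold dd. ring. }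
  assert (SfD : a*fDx a s u + fDy a s u - a*dd <= 0).
  { unfold fDx, fDy. fold dd. assert (a*((s+u)*dd) > 0) by (apply Rmult_lt_0_compat; [|apply Rmult_lt_0_compat]; lra).
    assert (s*u*dd > 0) by (apply Rmult_lt_0_compat; lra). assert (a*dd > a) by nra. lra. }
  set (Bx := yx + lam * (dd - yx)). set (By := yy + lam * (0 - yy)).
  assert (SB : a*Bx + By - a*dd = 0).
  { unfold Bx, By. replace (a * (yx + lam * (dd - yx)) + (yy + lam * (0 - yy)) - a * dd) with ((1-lam)*(a*yx + yy - a*dd)) by ring.
    rewrite SY; ring. }
  assert (GB : b*Bx + By - kk = 0).
  { assert (Hden: (b-1)*b*dd + b > 0). { assert ((b-1)*b*dd > 0) by (apply Rmult_lt_0_compat; [apply Rmult_lt_0_compat|]; lra). lra. }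
    unfold Bx, By, lam, T3.lam, yx, yy, T3.yx, T3.yy. fold kk dd. unfold dd, T2.dd in *.
    field_simplify; [unfold Rdiv; ring|..]. repeat split; try lra. assert (b*(b-a) > 0) by (apply Rmult_lt_0_compat; lra). nra. }
  assert (EB : (a+s+u)*By - s*u*(Bx - dd) >= 0).
  { unfold Bx, By. replace ((a + s + u) * (yy + lam * (0 - yy)) - s * u * (yx + lam * (dd - yx) - dd))
      with ((1-lam)*((a+s+u)*yy - s*u*(yx - dd))) by ring.
    assert ((a+s+u)*yy > 0) by (apply Rmult_lt_0_compat; lra).
    assert (s*u*(dd-yx) > 0) by (apply Rmult_lt_0_compat; lra). assert (s*u*(yx-dd) = -(s*u*(dd-yx))) by ring.
    apply Rle_ge, Rmult_le_pos; lra. }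
  assert (GD : b*dd + 0 - kk >= 0).
  { unfold kk, T2.kk. fold dd. assert (b*((s+u)*dd) > 0) by (apply Rmult_lt_0_compat; [|apply Rmult_lt_0_compat]; lra).
    assert (s*u*dd > 0) by (apply Rmult_lt_0_compat; lra). assert (b*dd > b) by nra. lra. }
  set (Z := padd (pscale s1 (dd, 0)) (padd (pscale t (fDx a s u, fDy a s u)) (pscale w (Bx, By)))).
  unfold Hset. fold dd kk. split; [|split].
  - replace (a * fst Z + snd Z - a*dd) with (aff a 1 (-(a*dd)) Z) by (unfold aff; ring).
    unfold Z. rewrite (aff_conv _ _ _ _ _ _ _ _ _ Hsum). unfold aff; simpl.
    assert (t * (a * fDx a s u + 1 * fDy a s u + - (a * dd)) <= 0).
    { assert (0 <= t * (-(a * fDx a s u + 1 * fDy a s u + - (a * dd)))) by (apply Rmult_le_pos; lra). lra. }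
    replace (a * Bx + 1 * By + - (a * dd)) with 0 by lra.
    replace (a * dd + 1 * 0 + - (a * dd)) with 0 by ring. lra.
  - replace (b * fst Z + snd Z - kk) with (aff b 1 (-kk) Z) by (unfold aff; ring).
    unfold Z. rewrite (aff_conv _ _ _ _ _ _ _ _ _ Hsum). unfold aff; simpl.
    assert (0 <= s1 * (b * dd + 1 * 0 + - kk)) by (apply Rmult_le_pos; lra).
    replace (b * Bx + 1 * By + - kk) with 0 by lra.
    replace (b * fDx a s u + 1 * fDy a s u + - kk) with 0 by lra. lra.
  - replace ((a+s+u) * snd Z - s*u*(fst Z - dd)) with (aff (-(s*u)) (a+s+u) (s*u*dd) Z) by (unfold aff; ring).
    unfold Z. rewrite (aff_conv _ _ _ _ _ _ _ _ _ Hsum). unfold aff; simpl.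
    assert (0 <= w * (- (s * u) * Bx + (a + s + u) * By + s * u * dd)) by (apply Rmult_le_pos; lra).
    replace (- (s * u) * fDx a s u + (a + s + u) * fDy a s u + s * u * dd) with 0 by lra.
    replace (- (s * u) * dd + (a + s + u) * 0 + s * u * dd) with 0 by ring. lra.
Qed.
End S2.

End T3.
Import T3.

Module T4.

Definition Vy (u : R) := - u / (1+u).
Definition Wx (s u : R) := 1 / (s*(1+u)).
Definition Wy (s u : R) := u*(1-s)/(s*(1+u)).

Lemma trans_lemma (s u py qx : R) : 0 < s -> s < 1 -> 1 < u ->
  Vy u < py -> py <= Wy s u -> 1/(1+u) <= qx ->
  transversal (0,py) (qx,0) (0, Vy u) (Wx s u, Wy s u).
Proof.
  intros Hs0 Hs1 Hu Hp1 Hp2 Hq.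
  unfold Vy, Wx, Wy in *.
  assert (Hu1 : 0 < 1 + u) by lra.
  assert (Hq' : u/(1+u) <= u*qx).
  { apply (Rmult_le_reg_r (1+u)); [lra|]. replace (u/(1+u)*(1+u)) with u by (field; lra).
    apply (Rmult_le_compat_r (1+u)) in Hq; [|lra]. replace (1/(1+u)*(1+u)) with 1 in Hq by (field; lra). nra. }
  assert (Hp1' : 0 < py + u/(1+u)). { replace (-u/(1+u)) with (-(u/(1+u))) in Hp1 by (field; lra). lra. }
  assert (Hden : 0 < py + u*qx) by lra.
  set (t := (py + u/(1+u))/(py + u*qx)).
  assert (Ht : t * (py + u*qx) = py + u/(1+u)) by (unfold t; field; lra).
  assert (Ht0 : 0 <= t) by (unfold t; apply Rlt_le, Rdiv_lt_0_compat; lra).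
  assert (Ht1 : t <= 1).
  { unfold t. apply (Rmult_le_reg_r (py + u*qx)); [lra|]. unfold Rdiv. rewrite Rmult_assoc, Rinv_l by lra. lra. }
  assert (Hsu : 0 < s*(1+u)) by (apply Rmult_lt_0_compat; lra).
  assert (HW : u*(1-s)/(s*(1+u)) + u/(1+u) = u/(s*(1+u))) by (field; lra).
  assert (Hutq : u*(t*qx) <= u/(s*(1+u))).
  { assert (u*(t*qx) = (1-t)*py + u/(1+u)) by lra.
    destruct (Rle_or_lt 0 py).
    - assert (0 <= t*py) by (apply Rmult_le_pos; lra). lra.
    - assert (0 <= (1-t)*(-py)) by (apply Rmult_le_pos; lra).
      assert (0 <= u*(1-s)/(s*(1+u))) by (apply Rle_mult_inv_pos; [apply Rmult_le_pos|]; lra). lra. }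
  assert (Htq : t*qx*(s*(1+u)) <= 1).
  { assert (t*qx <= 1/(s*(1+u))).
    { apply (Rmult_le_reg_l u); [lra|]. replace (u*(1/(s*(1+u)))) with (u/(s*(1+u))) by (field; lra). lra. }
    apply (Rmult_le_compat_r (s*(1+u))) in H; [|lra]. replace (1/(s*(1+u))*(s*(1+u))) with 1 in H by (field; lra). lra. }
  assert (0 < 1/(1+u)) by (apply Rdiv_lt_0_compat; lra).
  assert (Htq0 : 0 <= t*qx) by (apply Rmult_le_pos; lra).
  split.
  - exists (padd (0,py) (pscale t (psub (qx,0) (0,py)))). split.
    + exists t. split; [lra|reflexivity].
    + exists (t*qx*(s*(1+u))). split; [split; [apply Rmult_le_pos; lra|lra]|].
      unfold padd, pscale, psub; simpl. f_equal.
      * field. lra.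
      * apply (Rmult_eq_reg_r (1+u)); [|lra].
        replace ((- u / (1 + u) + t * qx * (s * (1 + u)) * (u * (1 - s) / (s * (1 + u)) - - u / (1 + u))) * (1 + u))
          with (-u + t*qx*u*(1+u)) by (field; lra).
        replace ((py + t * (0 - py)) * (1 + u)) with ((py - t*py)*(1+u)) by ring.
        assert (Htp : t*py = py + u/(1+u) - t*u*qx) by lra. rewrite Htp.
        field. lra.
  - unfold cross, psub; simpl.
    replace ((qx - 0) * (u * (1 - s) / (s * (1 + u)) - - u / (1 + u)) - (0 - py) * (1 / (s * (1 + u)) - 0))
      with ((py + u*qx)/(s*(1+u))) by (field; lra).
    apply Rgt_not_eq. apply Rdiv_lt_0_compat; lra.
Qed.

Lemma V_eq xi a b s u : ctx xi a b s u -> V xi = (0, Vy u).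
Proof. intros C. pose proof (hu1 _ _ _ _ _ C). unfold V, Vy. rewrite (eRu _ _ _ _ _ C). f_equal. field. lra. Qed.

Lemma W_eq xi a b s u : ctx xi a b s u -> finv xi (V xi) = (Wx s u, Wy s u).
Proof. intros C. pose proof (hu1 _ _ _ _ _ C). pose proof (hs0 _ _ _ _ _ C). rewrite (V_eq _ _ _ _ _ C).
  unfold finv. destruct (Rle_dec 0 (Vy u)) as [Hv|Hv].
  - exfalso. unfold Vy in Hv. assert (0 < u/(1+u)) by (apply Rdiv_lt_0_compat; lra).
    replace (-u/(1+u)) with (-(u/(1+u))) in Hv by (field; lra). lra.
  - unfold Wx, Wy, Vy. rewrite (hDR _ _ _ _ _ C), (hTR _ _ _ _ _ C). f_equal; field; lra.
Qed.

End T4.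
Import T4.

Module T5.

Lemma seg_at P Q r : 0 <= r <= 1 -> segment P Q (padd P (pscale r (psub Q P))).
Proof. intros. exists r. split; auto. Qed.

Lemma seg_sub P Q e1 e2 : segment P Q e1 -> segment P Q e2 -> forall z, segment e1 e2 z -> segment P Q z.
Proof.
  intros [r1 [Hr1 ->]] [r2 [Hr2 ->]] z [r [Hr ->]].
  exists (r1 + r*(r2 - r1)). split.
  - destruct (Rle_or_lt r1 r2).
    + split. assert (0 <= r*(r2-r1)) by (apply Rmult_le_pos; lra). lra.
      assert (r*(r2-r1) <= 1*(r2-r1)) by (apply Rmult_le_compat_r; lra). lra.
    + split. assert (r*(r1-r2) <= 1*(r1-r2)) by (apply Rmult_le_compat_r; lra). lra.
      assert (0 <= r*(r1-r2)) by (apply Rmult_le_pos; lra). lra.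
  - destruct P, Q. unfold padd, pscale, psub; simpl. f_equal; ring.
Qed.

Lemma seg_sym P Q z : segment P Q z -> segment Q P z.
Proof. intros [r [Hr ->]]. exists (1 - r). split; [lra|]. destruct P, Q. unfold padd, pscale, psub; simpl. f_equal; ring. Qed.

Lemma seg_fst P Q z : segment P Q z -> Rmin (fst P) (fst Q) <= fst z <= Rmax (fst P) (fst Q).
Proof. intros [r [Hr ->]]. destruct P as [p1 p2], Q as [q1 q2]. unfold padd, pscale, psub; simpl.
  unfold Rmin, Rmax. destruct (Rle_dec p1 q1).
  - split. assert (0 <= r*(q1-p1)) by (apply Rmult_le_pos; lra). lra.
    assert (r*(q1-p1) <= 1*(q1-p1)) by (apply Rmult_le_compat_r; lra). lra.
  - split. assert (r*(p1-q1) <= 1*(p1-q1)) by (apply Rmult_le_compat_r; lra). lra.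
    assert (0 <= r*(p1-q1)) by (apply Rmult_le_pos; lra). lra.
Qed.

Lemma seg_cross P Q : fst P <= 0 <= fst Q -> fst P < fst Q -> exists ey, segment P Q (0, ey).
Proof. intros H1 H2. destruct P as [p1 p2], Q as [q1 q2]. simpl in *.
  exists (p2 + (-p1)/(q1-p1)*(q2-p2)). exists ((-p1)/(q1-p1)). split.
  - split. apply Rmult_le_pos; [lra|]. apply Rlt_le, Rinv_0_lt_compat; lra.
    apply (Rmult_le_reg_r (q1-p1)); [lra|]. unfold Rdiv. rewrite Rmult_assoc, Rinv_l by lra. lra.
  - unfold padd, pscale, psub; simpl. f_equal; field; lra.
Qed.

Section M.
Variables (xi : param) (a b s u : R).
Hypothesis C : ctx xi a b s u.
Hypothesis Hphi : phi xi > 0.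
Hypothesis Has : a + s < 1.
Variables A0 A1 : pt.
Hypothesis Halpha : forall z, segment A0 A1 z -> Hset a b s u z.

Definition Img t z := image_iter xi t (segment A0 A1) z.

Lemma img_step t z : Img t z -> Img (S t) (Defs.f xi z).
Proof. intros [p [Hp ->]]. exists p. split; auto. Qed.

Lemma img_Hset t : forall z, Img t z -> Hset a b s u z.
Proof. induction t; intros z [p [Hp ->]].
  - simpl. auto.
  - simpl. apply (Hset_inv _ _ _ _ _ C _ Hphi). apply IHt. exists p; auto. Qed.

Lemma seg_img_L P Q z : fst P <= 0 -> fst Q <= 0 -> segment (Defs.f xi P) (Defs.f xi Q) z ->
  exists z', segment P Q z' /\ z = Defs.f xi z'.
Proof. intros HP HQ Hz. destruct P as [p1 p2], Q as [q1 q2]. simpl in HP, HQ.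
  rewrite (fL _ _ _ _ _ C) in Hz by auto. rewrite (fL _ _ _ _ _ C) in Hz by auto.
  destruct Hz as [r [Hr ->]]. exists (padd (p1,p2) (pscale r (psub (q1,q2) (p1,p2)))). split; [apply seg_at; auto|].
  unfold padd, pscale, psub; cbn [fst snd]. rewrite (fL _ _ _ _ _ C).
  - f_equal; ring.
  - assert (r*(q1-p1) <= 0 \/ 0 <= r*(q1-p1)) by lra. destruct (Rle_or_lt p1 q1).
    + assert (r*(q1-p1) <= 1*(q1-p1)) by (apply Rmult_le_compat_r; lra). lra.
    + assert (0 <= r*(p1-q1)) by (apply Rmult_le_pos; lra). lra.
Qed.

Lemma seg_img_R P Q z : 0 <= fst P -> 0 <= fst Q -> segment (Defs.f xi P) (Defs.f xi Q) z ->
  exists z', segment P Q z' /\ z = Defs.f xi z'.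
Proof. intros HP HQ Hz. destruct P as [p1 p2], Q as [q1 q2]. simpl in HP, HQ.
  rewrite (fR _ _ _ _ _ C) in Hz by auto. rewrite (fR _ _ _ _ _ C) in Hz by auto.
  destruct Hz as [r [Hr ->]]. exists (padd (p1,p2) (pscale r (psub (q1,q2) (p1,p2)))). split; [apply seg_at; auto|].
  unfold padd, pscale, psub; cbn [fst snd]. rewrite (fR _ _ _ _ _ C).
  - f_equal; ring.
  - destruct (Rle_or_lt p1 q1).
    + assert (0 <= r*(q1-p1)) by (apply Rmult_le_pos; lra). lra.
    + assert (r*(p1-q1) <= 1*(p1-q1)) by (apply Rmult_le_compat_r; lra). lra.
Qed.

End M.

End T5.
Import T5.

Module T6.

Section M.
Variables (xi : param) (a b s u : R).
Hypothesis C : ctx xi a b s u.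
Hypothesis Hphi : phi xi > 0.
Hypothesis Has : a + s < 1.
Variables A0 A1 : pt.
Hypothesis Halpha : forall z, segment A0 A1 z -> Hset a b s u z.

Let Img := Img xi A0 A1.

Definition St t p q := fst p < fst q /\
  (exists m, - a <= m <= s /\ snd q - snd p = m * (fst q - fst p)) /\
  (forall z, segment p q z -> Img t z).

Definition Success := exists (n : nat) (py qx : R), (1 <= n)%nat /\
  (forall z, segment (0, py) (qx, 0) z -> Img n z) /\
  transversal (0, py) (qx, 0) (V xi) (finv xi (V xi)).

Ltac facts := pose proof (ha0 _ _ _ _ _ C); pose proof (ha1 _ _ _ _ _ C); pose proof (hb1 _ _ _ _ _ C);
  pose proof (hs0 _ _ _ _ _ C); pose proof (hs1 _ _ _ _ _ C); pose proof (hu1 _ _ _ _ _ C).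

Lemma stepA t p q : St t p q -> fst q <= 0 ->
  St (S t) (Defs.f xi p) (Defs.f xi q) /\ fst (Defs.f xi q) - fst (Defs.f xi p) >= b * (fst q - fst p).
Proof.
  intros [Hw [[m [Hm Hs]] Hi]] Hq. facts.
  assert (Himg : forall z, segment (Defs.f xi p) (Defs.f xi q) z -> Img (S t) z).
  { intros z Hz. destruct (seg_img_L _ _ _ _ _ C p q z ltac:(lra) Hq Hz) as [z' [Hz' ->]].
    apply img_step. apply Hi; auto. }
  destruct p as [p1 p2], q as [q1 q2]. cbn [fst snd] in Hw, Hs, Hq.
  rewrite (fL _ _ _ _ _ C) by lra. rewrite (fL _ _ _ _ _ C) by lra. cbn [fst snd].
  rewrite (fL _ _ _ _ _ C) in Himg by lra. rewrite (fL _ _ _ _ _ C) in Himg by lra.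
  assert (Hab : a + b + m >= b) by lra.
  assert (Hwp : (a+b+m)*(q1-p1) >= b*(q1-p1)) by (apply Rle_ge, Rmult_le_compat_r; lra).
  assert (b*(q1-p1) > 0) by (apply Rmult_lt_0_compat; lra).
  unfold St; cbn [fst snd]. split; [split; [|split]|].
  - lra.
  - exists (-(a*b)/(a+b+m)). split.
    + split.
      * apply (Rmult_le_reg_r (a+b+m)); [lra|]. unfold Rdiv. rewrite Rmult_assoc, Rinv_l by lra.
        assert (0 <= a*(a+m)) by (apply Rmult_le_pos; lra). nra.
      * assert (0 < a*b/(a+b+m)) by (apply Rdiv_lt_0_compat; [apply Rmult_lt_0_compat|]; lra).
        replace (-(a*b)/(a+b+m)) with (-(a*b/(a+b+m))) by (field; lra). lra.
    + replace q2 with (p2 + m*(q1-p1)) by lra. field. lra.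
  - exact Himg.
  - lra.
Qed.

Lemma stepB t p q : St t p q -> 0 <= fst p ->
  St (S t) (Defs.f xi q) (Defs.f xi p) /\ fst (Defs.f xi p) - fst (Defs.f xi q) >= u * (fst q - fst p).
Proof.
  intros [Hw [[m [Hm Hs]] Hi]] Hp. facts.
  assert (Himg : forall z, segment (Defs.f xi q) (Defs.f xi p) z -> Img (S t) z).
  { intros z Hz. apply seg_sym in Hz. destruct (seg_img_R _ _ _ _ _ C p q z Hp ltac:(lra) Hz) as [z' [Hz' ->]].
    apply img_step. apply Hi; auto. }
  destruct p as [p1 p2], q as [q1 q2]. cbn [fst snd] in Hw, Hs, Hp.
  rewrite (fR _ _ _ _ _ C) by lra. rewrite (fR _ _ _ _ _ C) by lra. cbn [fst snd].
  rewrite (fR _ _ _ _ _ C) in Himg by lra. rewrite (fR _ _ _ _ _ C) in Himg by lra.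
  assert (Hab : s + u - m >= u) by lra.
  assert (Hwp : (s+u-m)*(q1-p1) >= u*(q1-p1)) by (apply Rle_ge, Rmult_le_compat_r; lra).
  assert (u*(q1-p1) > 0) by (apply Rmult_lt_0_compat; lra).
  unfold St; cbn [fst snd]. split; [split; [|split]|].
  - lra.
  - exists ((s*u)/(s+u-m)). split.
    + split.
      * assert (0 < s*u/(s+u-m)) by (apply Rdiv_lt_0_compat; [apply Rmult_lt_0_compat|]; lra). lra.
      * apply (Rmult_le_reg_r (s+u-m)); [lra|]. unfold Rdiv. rewrite Rmult_assoc, Rinv_l by lra.
        assert (0 <= s*(s-m)) by (apply Rmult_le_pos; lra). nra.
    + replace q2 with (p2 + m*(q1-p1)) by lra. field. lra.
  - exact Himg.
  - lra.
Qed.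

Lemma Hset_axis y : Hset a b s u (0,y) -> Vy u < y.
Proof.
  intros [_ [_ HE]]. cbn [fst snd] in HE. facts.
  destruct (dd_pos _ _ _ _ _ C) as [Hd1 Hd2].
  set (dd := T2.dd a) in *. set (A := a+s+u) in *.
  assert (HA : A > 0) by (unfold A; lra).
  assert (Hid : u*A - (1+u)*(s*u*dd) = u*dd*((u+a)*(1-a-s))).
  { unfold A, dd, T2.dd. field. lra. }
  assert (K1 : (1+u)*(A*y) >= (1+u)*(-(s*u*dd))).
  { apply Rle_ge, Rmult_le_compat_l; lra. }
  assert (Hpos : u*dd*((u+a)*(1-a-s)) > 0).
  { apply Rmult_lt_0_compat; [apply Rmult_lt_0_compat|apply Rmult_lt_0_compat]; lra. }
  assert (K2 : A*((1+u)*y + u) > 0) by nra.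
  assert (K3 : (1+u)*y + u > 0).
  { destruct (Rle_or_lt ((1+u)*y + u) 0); auto. assert (A*((1+u)*y+u) <= 0) by nra. lra. }
  unfold Vy. apply (Rmult_lt_reg_r (1+u)); [lra|]. replace (-u/(1+u)*(1+u)) with (-u) by (field; lra). lra.
Qed.

Lemma seg_end P Q : segment P Q Q.
Proof. exists 1. split; [lra|]. destruct P, Q. unfold padd, pscale, psub; simpl. f_equal; ring. Qed.
Lemma seg_start P Q : segment P Q P.
Proof. exists 0. split; [lra|]. destruct P, Q. unfold padd, pscale, psub; simpl. f_equal; ring. Qed.

Lemma Succ_lemma t P qx : St t P (qx,0) -> fst P <= 0 -> (1 <= t)%nat -> 1/(1+u) <= qx ->
  (a*qx <= Wy s u \/ snd P <= 0) -> Success.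
Proof.
  intros [Hw [[m [Hm Hs]] Hi]] HP Ht Hq Hc. facts.
  assert (0 < 1/(1+u)) by (apply Rdiv_lt_0_compat; lra).
  destruct (seg_cross P (qx,0) ltac:(cbn [fst] in *; lra) Hw) as [ey Hey].
  assert (Hv : Vy u < ey) by (apply Hset_axis, (img_Hset _ _ _ _ _ C Hphi A0 A1 Halpha t), Hi, Hey).
  assert (Hsub : forall z, segment (0,ey) (qx,0) z -> Img t z).
  { intros z Hz. apply Hi. apply (seg_sub _ _ _ _ Hey (seg_end _ _) _ Hz). }
  assert (Hey2 : ey <= Wy s u).
  { destruct Hey as [r [Hr Heq]]. destruct P as [p1 p2]. unfold padd, pscale, psub in Heq. cbn [fst snd] in *.
    injection Heq as E1 E2.
    assert (0 <= Wy s u). { unfold Wy. apply Rle_mult_inv_pos; [apply Rmult_le_pos|apply Rmult_lt_0_compat]; lra. }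
    destruct Hc as [Hc|Hc].
    - assert (ey = - m * qx).
      { rewrite E2. replace (r*(0-p2)) with (m*(r*(qx-p1))) by (rewrite Hs; ring).
        replace (r*(qx-p1)) with (-p1) by lra. lra. }
      assert (0 < 1/(1+u)) by (apply Rdiv_lt_0_compat; lra).
      assert (-m*qx <= a*qx) by (apply Rmult_le_compat_r; lra). lra.
    - assert (0 <= (1-r) * (-p2)) by (apply Rmult_le_pos; lra). lra. }
  exists t, ey, qx. split; [auto|split; [auto|]].
  rewrite (W_eq _ _ _ _ _ C), (V_eq _ _ _ _ _ C). apply trans_lemma; auto.
Qed.

Lemma St_sub t p q e1 e2 : St t p q -> segment p q e1 -> segment p q e2 -> fst e1 < fst e2 -> St t e1 e2.
Proof.
  intros [Hw [[m [Hm Hs]] Hi]] H1 H2 H12. split; [auto|split].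
  - exists m. split; auto. destruct H1 as [r1 [_ ->]], H2 as [r2 [_ ->]].
    destruct p as [p1 p2], q as [q1 q2]. unfold padd, pscale, psub in *. cbn [fst snd] in *.
    replace (p2 + r2 * (q2 - p2) - (p2 + r1 * (q2 - p2))) with ((r2-r1)*(q2-p2)) by ring. rewrite Hs. ring.
  - intros z Hz. apply Hi. apply (seg_sub _ _ _ _ H1 H2 _ Hz).
Qed.

Definition Jv := b*u^2/(b+u).
Definition gam := Rmin b (Rmin u Jv).

Lemma step t p q : (1 <= S t)%nat -> St t p q -> Success \/ exists t' p' q', St t' p' q' /\ fst q' - fst p' >= gam * (fst q - fst p).
Proof.
  intros _ HS. pose proof HS as [Hw [[m [Hm Hs]] Hi]]. facts.
  assert (Hg1 : gam <= b) by (unfold gam; apply Rmin_l).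
  assert (Hg2 : gam <= u) by (unfold gam; eapply Rle_trans; [apply Rmin_r|apply Rmin_l]).
  assert (Hg3 : gam <= Jv) by (unfold gam; eapply Rle_trans; [apply Rmin_r|apply Rmin_r]).
  assert (Hg0 : 0 < gam).
  { unfold gam, Jv. apply Rmin_glb_lt; [lra|apply Rmin_glb_lt; [lra|]].
    apply Rdiv_lt_0_compat; [apply Rmult_lt_0_compat; [|apply pow_lt]|]; lra. }
  destruct (Rle_dec (fst q) 0) as [Hq|Hq].
  { right. destruct (stepA t p q HS Hq) as [H1' H2']. exists (S t), (Defs.f xi p), (Defs.f xi q). split; auto.
    assert (gam*(fst q - fst p) <= b*(fst q - fst p)) by (apply Rmult_le_compat_r; lra). lra. }
  destruct (Rle_dec 0 (fst p)) as [Hp|Hp].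
  { right. destruct (stepB t p q HS Hp) as [H1' H2']. exists (S t), (Defs.f xi q), (Defs.f xi p). split; auto.
    assert (gam*(fst q - fst p) <= u*(fst q - fst p)) by (apply Rmult_le_compat_r; lra). lra. }
  destruct (seg_cross p q ltac:(lra) Hw) as [cy Hc].
  assert (Hcy : Vy u < cy) by (apply Hset_axis, (img_Hset _ _ _ _ _ C Hphi A0 A1 Halpha t), Hi, Hc).
  assert (SL : St t p (0,cy)) by (apply (St_sub t p q); auto; [apply seg_start| cbn [fst]; lra]).
  assert (SR : St t (0,cy) q) by (apply (St_sub t p q); auto; [apply seg_end| cbn [fst]; lra]).
  assert (fc : Defs.f xi (0,cy) = (cy+1, 0)).
  { rewrite (fL _ _ _ _ _ C) by lra. f_equal; ring. }
  destruct (stepA t p (0,cy) SL ltac:(cbn [fst]; lra)) as [SA WA]. rewrite fc in SA, WA.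
  destruct (stepB t (0,cy) q SR ltac:(cbn [fst]; lra)) as [SB WB]. rewrite fc in SB, WB. cbn [fst] in WA, WB.
  assert (HQ : 1/(1+u) <= cy + 1).
  { unfold Vy in Hcy. replace (1/(1+u)) with (1 + -u/(1+u)) by (field; lra). lra. }
  assert (Hfq : snd (Defs.f xi q) <= 0).
  { destruct q as [q1 q2]. cbn [fst] in Hq. rewrite (fR _ _ _ _ _ C) by lra. cbn [snd].
    assert (0 <= s*u*q1) by (apply Rmult_le_pos; [apply Rmult_le_pos|]; lra). lra. }
  destruct (Rle_dec (fst (Defs.f xi q)) 0) as [Hfq1|Hfq1].
  { left. apply (Succ_lemma (S t) (Defs.f xi q) (cy+1)); auto. lia. }
  destruct (Rlt_dec (fst (Defs.f xi p)) 0) as [Hfp|Hfp].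
  - left. destruct (Rlt_dec ((cy+1)*(s+u)) 1) as [Hsm|Hsm].
    + apply (Succ_lemma (S t) (Defs.f xi p) (cy+1)); auto; [lra|lia|]. left.
      assert (0 < 1/(1+u)) by (apply Rdiv_lt_0_compat; lra).
      assert (Hsu : s*(1+u) <= u*(s+u)) by nra.
      unfold Wy. apply (Rmult_le_reg_r (s*(1+u))); [apply Rmult_lt_0_compat; lra|].
      replace (u*(1-s)/(s*(1+u))*(s*(1+u))) with (u*(1-s)) by (field; lra).
      assert (a*(cy+1)*(s*(1+u)) <= a*(cy+1)*(u*(s+u))) by (apply Rmult_le_compat_l; [apply Rmult_le_pos|]; lra).
      assert (a*(cy+1)*(u*(s+u)) = u*a*((cy+1)*(s+u))) by ring.
      assert (u*a*((cy+1)*(s+u)) <= u*a*1) by (apply Rmult_le_compat_l; [apply Rmult_le_pos|]; lra).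
      assert (u*a <= u*(1-s)) by (apply Rmult_le_compat_l; lra). lra.
    + destruct SA as [SAw SAr]. assert (0 < 1/(1+u)) by (apply Rdiv_lt_0_compat; lra).
      destruct (seg_cross (Defs.f xi p) (cy+1,0) ltac:(cbn [fst]; lra) SAw) as [ey Hey].
      assert (S2 : St (S t) (0,ey) (cy+1,0)).
      { apply (St_sub (S t) (Defs.f xi p) (cy+1,0)); auto. split; auto. apply seg_end. cbn [fst]; lra. }
      assert (Hvy : Vy u < ey) by (apply Hset_axis, (img_Hset _ _ _ _ _ C Hphi A0 A1 Halpha (S t)), (proj2 (proj2 S2)), seg_start).
      destruct (stepB (S t) (0,ey) (cy+1,0) S2 ltac:(cbn [fst]; lra)) as [S3 _].
      assert (fe : Defs.f xi (0,ey) = (ey+1, 0)).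
      { rewrite (fL _ _ _ _ _ C) by lra. f_equal; ring. }
      rewrite fe in S3.
      assert (fQ : Defs.f xi (cy+1,0) = (-(s+u)*(cy+1) + 0 + 1, -(s*u)*(cy+1))).
      { rewrite (fR _ _ _ _ _ C); [reflexivity|]. assert (0 < 1/(1+u)) by (apply Rdiv_lt_0_compat; lra). lra. }
      rewrite fQ in S3.
      apply (Succ_lemma (S (S t)) _ (ey+1) S3); cbn [fst snd]; [lra|lia| |].
      * unfold Vy in Hvy. replace (1/(1+u)) with (1 + -u/(1+u)) by (field; lra). lra.
      * right. assert (0 < 1/(1+u)) by (apply Rdiv_lt_0_compat; lra).
        assert (0 <= s*u*(cy+1)) by (apply Rmult_le_pos; [apply Rmult_le_pos|]; lra). lra.
  - right.
    destruct (stepB (S t) (Defs.f xi p) (cy+1,0) SA ltac:(lra)) as [S1 W1].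
    destruct (stepB (S t) (Defs.f xi q) (cy+1,0) SB ltac:(lra)) as [S2 W2].
    cbn [fst] in W1, W2.
    set (L := 0 - fst p) in *. set (R := fst q - 0) in *.
    assert (HL : L > 0) by (unfold L; lra). assert (HR : R > 0) by (unfold R; lra).
    assert (Hwid : fst q - fst p = L + R) by (unfold L, R; ring).
    assert (HJ : Jv * (b+u) = b*u^2) by (unfold Jv; field; lra).
    destruct (Rle_dec (u*R) (b*L)) as [Hc1|Hc1].
    + exists (S (S t)), (Defs.f xi (cy+1,0)), (Defs.f xi (Defs.f xi p)). split; auto.
      assert (Jv*(L+R) <= u*(b*L)).
      { apply (Rmult_le_reg_r (b+u)); [lra|]. replace (Jv*(L+R)*(b+u)) with (b*u^2*(L+R)) by (rewrite <- HJ; ring).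
        assert (b*u*(u*R) <= b*u*(b*L)) by (apply Rmult_le_compat_l; [apply Rmult_le_pos|]; lra).
        assert (E1: b*u^2*(L+R) = b*u^2*L + b*u*(u*R)) by ring. assert (E2: u*(b*L)*(b+u) = b*u^2*L + b*u*(b*L)) by ring. lra. }
      assert (u*(b*L) <= u*((cy+1) - fst (Defs.f xi p))) by (apply Rmult_le_compat_l; lra).
      assert (gam*(L+R) <= Jv*(L+R)) by (apply Rmult_le_compat_r; lra). rewrite Hwid. lra.
    + exists (S (S t)), (Defs.f xi (cy+1,0)), (Defs.f xi (Defs.f xi q)). split; auto.
      assert (Jv*(L+R) <= u*(u*R)).
      { apply (Rmult_le_reg_r (b+u)); [lra|]. replace (Jv*(L+R)*(b+u)) with (b*u^2*(L+R)) by (rewrite <- HJ; ring).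
        assert (u*u*(b*L) <= u*u*(u*R)) by (apply Rmult_le_compat_l; [apply Rmult_le_pos|]; lra).
        assert (E1: b*u^2*(L+R) = u*u*(b*L) + b*u^2*R) by ring. assert (E2: u*(u*R)*(b+u) = b*u^2*R + u*u*(u*R)) by ring. lra. }
      assert (u*(u*R) <= u*((cy+1) - fst (Defs.f xi q))) by (apply Rmult_le_compat_l; lra).
      assert (gam*(L+R) <= Jv*(L+R)) by (apply Rmult_le_compat_r; lra). rewrite Hwid. lra.
Qed.
End M.

End T6.
Import T6.

Module T7.

Section F.
Variables (xi : param) (a b s u : R).
Hypothesis C : ctx xi a b s u.
Hypothesis Hphi : phi xi > 0.
Hypothesis Has : a + s < 1.
Hypothesis HJ : Jv b u > 1.
Variables A0 A1 : pt.
Hypothesis Halpha : forall z, segment A0 A1 z -> Hset a b s u z.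

Lemma iter_k p0 q0 : St xi a s A0 A1 0 p0 q0 -> forall k : nat,
  Success xi A0 A1 \/ exists t p q, St xi a s A0 A1 t p q /\ fst q - fst p >= (gam b u)^k * (fst q0 - fst p0).
Proof.
  intros H0 k. pose proof (hb1 _ _ _ _ _ C). pose proof (hu1 _ _ _ _ _ C).
  assert (Hg : 0 < gam b u). { unfold gam. apply Rmin_glb_lt; [lra|apply Rmin_glb_lt; lra]. }
  induction k.
  - right. exists 0%nat, p0, q0. split; auto. simpl. lra.
  - destruct IHk as [HS | [t [p [q [Hst Hw]]]]]; [left; auto|].
    destruct (step xi a b s u C Hphi Has A0 A1 Halpha t p q ltac:(lia) Hst) as [HS | [t' [p' [q' [Hst' Hw']]]]]; [left; auto|].
    right. exists t', p', q'. split; auto. simpl.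
    assert (gam b u * (fst q - fst p) >= gam b u * ((gam b u)^k * (fst q0 - fst p0))) by (apply Rle_ge, Rmult_le_compat_l; lra).
    lra.
Qed.

Lemma width_bound t p q : St xi a s A0 A1 t p q -> fst q - fst p <= T2.dd a - (T2.kk a b s u - a*T2.dd a)/(b-a).
Proof.
  intros [Hw [_ Hi]]. pose proof (ha1 _ _ _ _ _ C). pose proof (hb1 _ _ _ _ _ C).
  pose proof (img_Hset _ _ _ _ _ C Hphi A0 A1 Halpha t p (Hi p (seg_start p q))) as Hp.
  pose proof (img_Hset _ _ _ _ _ C Hphi A0 A1 Halpha t q (Hi q (seg_end p q))) as Hq.
  pose proof (Hset_x_le _ _ _ _ _ C q Hq).
  destruct Hp as [Hp1 [Hp2 _]].
  assert ((T2.kk a b s u - a*T2.dd a)/(b-a) <= fst p).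
  { apply (Rmult_le_reg_r (b-a)); [lra|]. unfold Rdiv. rewrite Rmult_assoc, Rinv_l by lra. lra. }
  lra.
Qed.

Lemma final p0 q0 : St xi a s A0 A1 0 p0 q0 -> Success xi A0 A1.
Proof.
  intros H0. pose proof (hb1 _ _ _ _ _ C). pose proof (hu1 _ _ _ _ _ C).
  assert (Hg : gam b u > 1). { unfold gam. apply Rmin_glb_lt; [lra|apply Rmin_glb_lt; lra]. }
  set (M := T2.dd a - (T2.kk a b s u - a*T2.dd a)/(b-a)).
  set (w0 := fst q0 - fst p0).
  assert (Hw0 : w0 > 0) by (unfold St in H0; destruct H0 as [Hlt _]; unfold w0; lra).
  assert (HM : 0 <= M) by (pose proof (width_bound _ _ _ H0) as Hwb; fold M in Hwb; fold w0 in Hwb; lra).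
  destruct (Pow_x_infinity (gam b u) ltac:(rewrite Rabs_right; lra) (M/w0 + 1)) as [N HN].
  specialize (HN N (le_n N)). rewrite Rabs_right in HN by (apply Rle_ge, pow_le; lra).
  destruct (iter_k p0 q0 H0 N) as [HS | [t [p [q [Hst Hw]]]]]; auto.
  exfalso. pose proof (width_bound _ _ _ Hst) as Hb. fold M in Hb.
  assert ((gam b u)^N * w0 >= (M/w0 + 1) * w0) by (apply Rle_ge, Rmult_le_compat_r; lra).
  replace ((M/w0 + 1)*w0) with (M + w0) in H2 by (field; lra).
  fold w0 in Hw. lra.
Qed.
End F.


End T7.
Import T7.

Theorem lemma5p3 (xi : param) (A0 A1 : pt) :
  in_Phi_BYG xi ->
  J1 xi > 1 ->
  lamLs xi + Rabs (lamRs xi) < 1 ->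
  A0 <> A1 ->
  (exists m, - lamLs xi <= m <= Rabs (lamRs xi) /\
             cross (psub A1 A0) (1, m) = 0) ->
  (forall z, segment A0 A1 z -> Omega xi z) ->
  exists (n : nat) (py qx : R),
    (1 <= n)%nat /\
    (forall z, segment (0, py) (qx, 0) z -> image_iter xi n (segment A0 A1) z) /\
    transversal (0, py) (qx, 0) (V xi) (finv xi (V xi)).
Proof.
  intros [HPhi Hphi] HJ Hsum Hneq [m [Hm Hcr]] HOm.
  pose proof (get_ctx xi HPhi) as C.
  set (a := lamLs xi) in *. set (b := lamLu xi) in *.
  set (s := - lamRs xi) in *. set (u := - lamRu xi) in *.
  pose proof (hs0 _ _ _ _ _ C). pose proof (hu1 _ _ _ _ _ C). pose proof (hb1 _ _ _ _ _ C).
  assert (Hrs : Rabs (lamRs xi) = s). { rewrite Rabs_left. unfold s; ring. unfold s in *; lra. }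
  rewrite Hrs in Hsum, Hm.
  assert (HJv : Jv b u > 1).
  { unfold J1 in HJ. unfold Jv. replace (lamRu xi) with (-u) in HJ by (unfold u; ring).
    rewrite Rabs_left in HJ by lra. fold b in HJ. replace ((-u)^2) with (u^2) in HJ by ring.
    replace (- - u) with u in HJ by ring. exact HJ. }
  assert (Halpha : forall z, segment A0 A1 z -> Hset a b s u z).
  { intros z Hz. apply (Omega_Hset xi a b s u C Hphi). auto. }
  destruct A0 as [x0 y0], A1 as [x1 y1]. unfold cross, psub in Hcr. cbn [fst snd] in Hcr.
  assert (Himg0 : forall z, segment (x0,y0) (x1,y1) z -> Img xi (x0,y0) (x1,y1) 0 z).
  { intros z Hz. exists z. split; auto. }
  destruct (Rtotal_order x0 x1) as [Hlt | [Heq | Hgt]].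
  - apply (final xi a b s u C Hphi Hsum HJv (x0,y0) (x1,y1) Halpha (x0,y0) (x1,y1)).
    split; [cbn; lra|split; [|auto]]. exists m. split; [lra|]. cbn [fst snd]. lra.
  - exfalso. apply Hneq. subst. f_equal. lra.
  - apply (final xi a b s u C Hphi Hsum HJv (x0,y0) (x1,y1) Halpha (x1,y1) (x0,y0)).
    split; [cbn; lra|split].
    + exists m. split; [lra|]. cbn [fst snd]. lra.
    + intros z Hz. apply Himg0. apply seg_sym. auto.
Qed.
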